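(* Let $X$ be a compact space and $\mathcal{A}$ a dense subspace of $C(X)$ (real continuous functions, supremum norm) containing the constant functions and closed under finite lattice operations. Let $L$ be a Lip-norm on $\mathcal{A}$ such that $L(f\vee g)\le L(f)\vee L(g)$ for all $f,g\in\mathcal{A}$. Then $L$ is the restriction to $\mathcal{A}$ of the ordinary Lipschitz seminorm on $C(X)$ corresponding to the metric $\rho_L$ on $X$, i.e. $L(f)=\sup\{|f(x)-f(y)|/\rho_L(\delta_x,\delta_y):x,y\in X,\ x\ne y\}$ for all $f\in\mathcal{A}$.
   Context: $\mathcal{A}$ is an order-unit space with order unit $1$; its states are the continuous linear functionals $\mu$ with $\mu(1)=1=\|\mu\|$, and $\delta_x$ denotes evaluation at $x$. $\rho_L(\mu,\nu)=\sup\{|\mu(f)-\nu(f)|:f\in\mathcal{A},L(f)\le1\}$. A Lip-norm on $\mathcal{A}$ is a finite-valued seminorm $L$ with: (1) $L(f)=0$ iff $f$ is constant; (2) $\{f\in\mathcal{A}:L(f)\le1\}$ is norm-closed in $\mathcal{A}$; (3) the image of $\{f:L(f)\le1\}$ in $\mathcal{A}/\mathbb{R}1$ is totally bounded for the quotient norm. $f\vee g$ is the pointwise maximum. *)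

(* Defs.v *)
From HB Require Import structures.
From mathcomp Require Import all_boot all_order all_algebra.
From mathcomp Require Import all_classical all_reals all_analysis.
Set Implicit Arguments. Unset Strict Implicit. Unset Printing Implicit Defensive.
Import Order.TTheory GRing.Theory Num.Theory numFieldNormedType.Exports.
Local Open Scope classical_set_scope.
Local Open Scope ring_scope.

(* A is a set of real functions on X (a subspace of C(X)); L : (X -> R) -> R
   is only meaningful on A. *)

Definition dense_lattice_subspace {R : realType} {X : topologicalType}
  (A : set (X -> R)) : Prop :=
  (forall f, A f -> continuous f) /\
  (forall c : R, A (fun _ => c)) /\
  (forall f g, A f -> A g -> A (fun x => f x + g x)) /\
  (forall (c : R) f, A f -> A (fun x => c * f x)) /\
  (forall f g, A f -> A g -> A (fun x => Num.max (f x) (g x))) /\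
  (forall f g, A f -> A g -> A (fun x => Num.min (f x) (g x))) /\
  (forall f, continuous f -> forall e : R, 0 < e ->
         exists2 g, A g & forall x, `|f x - g x| < e).

Definition seminorm_on {R : realType} {X : Type}
  (A : set (X -> R)) (L : (X -> R) -> R) : Prop :=
  (forall f g, A f -> A g -> L (fun x => f x + g x) <= L f + L g) /\
  (forall (c : R) f, A f -> L (fun x => c * f x) = `|c| * L f).

Definition lip_norm {R : realType} {X : Type}
  (A : set (X -> R)) (L : (X -> R) -> R) : Prop :=
  [/\ seminorm_on A L,
      (forall f, A f -> (L f = 0 <-> exists c : R, f = (fun _ => c))),
      (* (2) {f in A | L f <= 1} is closed in A for the sup norm *)
      (forall f, A f ->
         (forall e : R, 0 < e -> exists2 g, A g /\ L g <= 1 &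
             forall x, `|f x - g x| < e) -> L f <= 1)
    & (* (3) its image in A / R1 is totally bounded for the quotient norm *)
      (forall e : R, 0 < e -> exists s : seq (X -> R),
         (forall g, g \in s -> A g) /\
         (forall f, A f -> L f <= 1 ->
            exists2 g, g \in s & exists c : R, forall x, `|f x - g x - c| < e))].

Definition delta {R : realType} {X : Type} (x : X) : (X -> R) -> R :=
  fun f => f x.

Definition rhoL {R : realType} {X : Type} (A : set (X -> R))
  (L : (X -> R) -> R) (mu nu : (X -> R) -> R) : R :=
  sup [set `|mu f - nu f| | f in [set f | A f /\ L f <= 1]].

(* ordinary Lipschitz seminorm of f w.r.t. the metric d, valued in [0, +oo]
   (the 0 accounts for the convention sup of the empty set = 0) *)
Definition lip_const {R : realType} {X : Type} (d : X -> X -> R)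
  (f : X -> R) : \bar R :=
  ereal_sup ([set 0%E] `|`
    [set z | exists x y, x <> y /\ z = (`|f x - f y| / d x y)%:E]).

(* Main.v *)
Require Import Defs.
From HB Require Import structures.
From mathcomp Require Import all_boot all_order all_algebra.
From mathcomp Require Import all_classical all_reals all_analysis.
From mathcomp Require Import ring lra.
Import Order.TTheory GRing.Theory Num.Theory numFieldNormedType.Exports.
Local Open Scope classical_set_scope.
Local Open Scope ring_scope.

Section P.
Variables (X : topologicalType) (x0 : X).
Definition pX : Type := (fun _ : X => (X : Type)) x0.
HB.instance Definition _ := Topological.on pX.
HB.instance Definition _ := isPointed.Build pX x0.
Lemma cpt : compact [set: X] -> cover_compact [set: pX].
Proof. by move=> c; rewrite -compact_cover. Qed.
End P.

Section Main.
Variables (R : realType) (X : topologicalType) (A : set (X -> R)) (L : (X -> R) -> R).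
Hypothesis hA : dense_lattice_subspace A.
Hypothesis hL : lip_norm A L.
Hypothesis hmax : forall f g, A f -> A g ->
  L (fun x => Num.max (f x) (g x)) <= Num.max (L f) (L g).

Lemma Acont f : A f -> continuous f. Proof. by have [h _] := hA; apply: h. Qed.
Lemma Aconst c : A (fun _ => c). Proof. by case: hA => _ [h _]; apply: h. Qed.
Lemma Aadd {f g} : A f -> A g -> A (fun x => f x + g x). Proof. by case: hA => _ [_ [h _]]; apply: h. Qed.
Lemma Ascale c {f} : A f -> A (fun x => c * f x). Proof. by case: hA => _ [_ [_ [h _]]]; apply: h. Qed.
Lemma Amax {f g} : A f -> A g -> A (fun x => Num.max (f x) (g x)).
Proof. by case: hA => _ [_ [_ [_ [h _]]]]; apply: h. Qed.
Lemma Amin {f g} : A f -> A g -> A (fun x => Num.min (f x) (g x)).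
Proof. by case: hA => _ [_ [_ [_ [_ [h _]]]]]; apply: h. Qed.
Lemma Ltri {f g} : A f -> A g -> L (fun x => f x + g x) <= L f + L g.
Proof. by case: hL => [[h _] _ _ _]; apply: h. Qed.
Lemma Lscale c {f} : A f -> L (fun x => c * f x) = `|c| * L f.
Proof. by case: hL => [[_ h] _ _ _]; apply: h. Qed.
Lemma Lconst c : L (fun _ => c) = 0.
Proof. case: hL => _ h _ _; apply/(h _ (Aconst c)); by exists c. Qed.
Lemma Lzero {f} : A f -> L f = 0 -> exists c, f = fun _ => c.
Proof. by case: hL => _ h _ _ Af /(h _ Af). Qed.

Lemma oppE (f : X -> R) : (fun x => - f x) = (fun x => -1 * f x).
Proof. by apply: funext => x; rewrite mulN1r. Qed.
Lemma Aopp {f} : A f -> A (fun x => - f x).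
Proof. by move=> Af; rewrite oppE; apply: Ascale. Qed.
Lemma Lopp {f} : A f -> L (fun x => - f x) = L f.
Proof. by move=> Af; rewrite oppE Lscale // normrN normr1 mul1r. Qed.
Lemma Lge0 {f} : A f -> 0 <= L f.
Proof.
move=> Af; have := Ltri Af (Aopp Af).
have -> : (fun x => f x + - f x) = (fun _ => 0) by apply: funext => x; rewrite subrr.
rewrite Lconst Lopp //; lra.
Qed.
Lemma Lmin {f g} : A f -> A g ->
  L (fun x => Num.min (f x) (g x)) <= Num.max (L f) (L g).
Proof.
move=> Af Ag.
have -> : (fun x => Num.min (f x) (g x)) = (fun x => - Num.max (- f x) (- g x)).
  by apply: funext => x; rewrite oppr_max !opprK.
rewrite Lopp; last by apply: Amax; apply: Aopp.
by rewrite -(Lopp Af) -(Lopp Ag); apply: hmax; apply: Aopp.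
Qed.

Lemma Laffine K c {g} : A g -> 0 <= K ->
  A (fun z => K * g z + c) /\ L (fun z => K * g z + c) <= K * L g.
Proof.
move=> Ag K0; split; first exact: (Aadd (Ascale K Ag) (Aconst c)).
have := Ltri (Ascale K Ag) (Aconst c).
by rewrite Lconst addr0 Lscale // ger0_norm.
Qed.

Lemma fold_min (I : eqType) (h : I -> X -> R) (K : R) (i0 : I) (s : seq I) :
  (forall i, A (h i) /\ L (h i) <= K) ->
  exists m, [/\ A m, L m <= K, (forall z i, i \in s -> m z <= h i z)
     & forall z, exists i, m z = h i z].
Proof.
move=> hh; elim: s => [|a s [m [Am Lm ms mw]]].
  exists (h i0); case: (hh i0) => h1 h2; split.
  - exact: h1.
  - exact: h2.
  - by move=> z i; rewrite in_nil.
  - by move=> z; exists i0.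
exists (fun z => Num.min (h a z) (m z)); case: (hh a) => Aa La; split.
- exact: Amin.
- by apply: le_trans (Lmin Aa Am) _; rewrite ge_max La Lm.
- move=> z i; rewrite in_cons => /orP [/eqP -> | iin]; rewrite ge_min ?lexx //.
  by rewrite (ms z i iin) orbT.
- move=> z; case: (leP (h a z) (m z)) => hz; first by exists a.
  by have [i hi] := mw z; exists i.
Qed.

Lemma fold_max (I : eqType) (h : I -> X -> R) (K : R) (i0 : I) (s : seq I) :
  (forall i, A (h i) /\ L (h i) <= K) ->
  exists m, [/\ A m, L m <= K, (forall z i, i \in s -> h i z <= m z)
     & forall z, exists i, m z = h i z].
Proof.
move=> hh; elim: s => [|a s [m [Am Lm ms mw]]].
  exists (h i0); case: (hh i0) => h1 h2; split.
  - exact: h1.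
  - exact: h2.
  - by move=> z i; rewrite in_nil.
  - by move=> z; exists i0.
exists (fun z => Num.max (h a z) (m z)); case: (hh a) => Aa La; split.
- exact: Amax.
- by apply: le_trans (hmax _ _ Aa Am) _; rewrite ge_max La Lm.
- move=> z i; rewrite in_cons => /orP [/eqP -> | iin]; rewrite le_max ?lexx //.
  by rewrite (ms z i iin) orbT.
- move=> z; case: (leP (h a z) (m z)) => hz; last by exists a.
  by have [i hi] := mw z; exists i.
Qed.

Definition rho x y := rhoL A L (delta x) (delta y).

Lemma sum_ge (s : seq (X -> R)) (F : (X -> R) -> R) :
  (forall g, 0 <= F g) -> forall g, g \in s -> F g <= \sum_(h <- s) F h.
Proof.
move=> F0; elim: s => // a s IH g; rewrite in_cons big_cons => /orP [/eqP -> | /IH].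
  by rewrite lerDl; apply: sumr_ge0 => *; apply: F0.
by move=> h; apply: le_trans h _; rewrite lerDr.
Qed.

Lemma hasS x y : has_sup [set `|delta x g - delta y g| | g in [set g | A g /\ L g <= 1]].
Proof.
split.
  exists 0; exists (fun _ => 0); last by rewrite /delta subrr normr0.
  by split; [exact: Aconst | rewrite Lconst ler01].
case: hL => _ _ _ tb; have [s [sA sc]] := tb 1 ltr01.
exists (2 + \sum_(h <- s) `|h x - h y|) => r [g [Ag Lg] <-].
have [g' g's [c hc]] := sc g Ag Lg.
have := hc x; have := hc y.
have := @sum_ge s (fun h => `|h x - h y|) (fun _ => normr_ge0 _) g' g's.
have e : g x - g y = (g x - g' x - c) - (g y - g' y - c) + (g' x - g' y) by ring.
rewrite /delta e => h1 h2 h3.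
apply: le_trans (ler_normD _ _) _.
apply: le_trans (lerD (ler_normB _ _) (lexx _)) _.
lra.
Qed.

Lemma rho_ub x y g : A g -> L g <= 1 -> `|g x - g y| <= rho x y.
Proof. move=> Ag Lg; apply: sup_upper_bound (hasS x y) _ _; by exists g. Qed.

Lemma rho_ge0 x y : 0 <= rho x y.
Proof.
apply: le_trans (@rho_ub x y (fun _ => 0) (Aconst 0) _); first exact: normr_ge0.
by rewrite Lconst ler01.
Qed.

Lemma key1 f x y : A f -> `|f x - f y| <= L f * rho x y.
Proof.
move=> Af; case: (eqVneq (L f) 0) => [/(Lzero Af) [c ->] | nz].
  by rewrite Lconst mul0r subrr normr0.
have Lp : 0 < L f by rewrite lt0r nz Lge0.
have Li : 0 < (L f)^-1 by rewrite invr_gt0.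
have h1 : L (fun z => (L f)^-1 * f z) <= 1.
  by rewrite Lscale // ger0_norm ?(ltW Li) // mulVf.
have := @rho_ub x y _ (Ascale (L f)^-1 Af) h1.
rewrite -mulrBr normrM ger0_norm ?(ltW Li) // => h.
by rewrite -(ler_pM2l Li) mulrA mulVf // mul1r.
Qed.

Lemma open_lt2 {g1 g2} c : A g1 -> A g2 -> open [set z : X | g1 z < g2 z + c].
Proof.
move=> A1 A2.
have -> : [set z | g1 z < g2 z + c] = (fun z => g1 z - g2 z) @^-1` [set r | r < c].
  by apply/seteqP; split => z /=; lra.
apply: open_comp; last exact: open_lt.
move=> z _; apply: (@cvgB _ _ _ _ _ g1 g2); exact: Acont.
Qed.

Hypothesis hc : compact [set: X].

Lemma main_le (K : R) f : 0 < K -> A f ->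
  (forall x y, `|f x - f y| <= K * rho x y) -> L f <= K.
Proof.
move=> K0 Af hK.
case: (pselect (exists x : X, True)) => [[x0 _]|nX]; last first.
  have -> : f = (fun _ => 0) by apply: funext => x; exfalso; apply: nX; exists x.
  by rewrite Lconst ltW.
have cc := @cpt _ x0 hc.
have approx : forall eps, 0 < eps ->
    exists2 H, A H /\ L H <= K & forall z, `|f z - H z| < eps.
  move=> eps e0.
  have s1 : forall x y, exists h, [/\ A h, L h <= K, h x = f x & h y < f y + eps].
    move=> x y.
    have [_ [g [Ag Lg] <-] hr] := sup_adherent (divr_gt0 e0 K0) (hasS x y).
    have hr' : rho x y - eps / K < `|g x - g y| by exact: hr.
    have [g' [Ag' Lg' hg']] : exists g', [/\ A g', L g' <= 1 &
        rho x y - eps / K < g' x - g' y].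
      case: (leP 0 (g x - g y)) => sg.
        by exists g; split => //; rewrite ger0_norm in hr'.
      exists (fun z => - g z); split; [exact: Aopp | by rewrite Lopp |].
      rewrite ltr0_norm // in hr'; move: hr'; lra.
    exists (fun z => K * g' z + (f x - K * g' x)).
    have [Ah Lh] := Laffine K (f x - K * g' x) Ag' (ltW K0).
    split => //.
    - by apply: le_trans Lh _; have := ler_wpM2l (ltW K0) Lg'; rewrite mulr1.
    - by rewrite addrC subrK.
    - have h1 : K * (rho x y - eps / K) < K * (g' x - g' y) by rewrite ltr_pM2l.
      have e1 : K * (eps / K) = eps by rewrite mulrC divfK // gt_eqF.
      rewrite mulrBr e1 mulrBr in h1.
      have h2 := hK x y; have h3 := ler_norm (f x - f y).
      lra.
  have s2 : forall x, exists h, [/\ A h, L h <= K, h x = f x & forall z, h z < f z + eps].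
    move=> x; have [hy hyP] := choice (s1 x).
    have hh : forall i, A (hy i) /\ L (hy i) <= K by move=> i; case: (hyP i).
    have cv : [set: pX X x0] `<=` cover setT (fun y => [set z : pX X x0 | hy y z < f z + eps]).
      by move=> y _; exists y => //; case: (hyP y).
    have [D' _ cov] := cc _ setT _ (fun y _ => open_lt2 eps (proj1 (hh y)) Af) cv.
    have [m [Am Lm ms mw]] := @fold_min X hy K x (finmap.enum_fset D') hh.
    exists m; split => //.
    - by have [i ->] := mw x; case: (hyP i).
    - move=> z; have [y yD hyz] := cov z Logic.I.
      exact: le_lt_trans (ms z y yD) hyz.
  have [hx hxP] := choice s2.
  have hh : forall i, A (hx i) /\ L (hx i) <= K by move=> i; case: (hxP i).
  have cv : [set: pX X x0] `<=` cover setT (fun x => [set z : pX X x0 | f z < hx x z + eps]).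
    by move=> x _; exists x => //=; case: (hxP x) => _ _ -> _; rewrite ltrDl.
  have [D' _ cov] := cc _ setT _ (fun x _ => open_lt2 eps Af (proj1 (hh x))) cv.
  have [M [AM LM ms mw]] := @fold_max X hx K x0 (finmap.enum_fset D') hh.
  exists M => // z.
  have [y yD hyz] := cov z Logic.I.
  have h1 := ms z y yD.
  have [i hi] := mw z.
  have h2 : M z < f z + eps by rewrite hi; case: (hxP i).
  move: hyz => /= hyz.
  rewrite ltr_norml; apply/andP; split; lra.
case: hL => _ _ hcl _.
have KiK : 0 < K^-1 by rewrite invr_gt0.
have := hcl (fun z => K^-1 * f z) (Ascale K^-1 Af).
have -> : L (fun z => K^-1 * f z) = K^-1 * L f.
  by rewrite Lscale // ger0_norm ?(ltW KiK).
move=> h.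
have {}h : K^-1 * L f <= 1.
  apply: h => e e0; have [H [AH LH] hH] := approx (e * K) (mulr_gt0 e0 K0).
  exists (fun z => K^-1 * H z).
    split; first exact: Ascale.
    rewrite Lscale // ger0_norm ?(ltW KiK) //.
    apply: le_trans (ler_wpM2l (ltW KiK) LH) _.
    by rewrite mulVf ?gt_eqF.
  move=> z; rewrite -mulrBr normrM ger0_norm ?(ltW KiK) //.
  rewrite -(ltr_pM2l K0) mulrA mulfV ?gt_eqF // mul1r [K * e]mulrC.
  exact: hH.
have := ler_wpM2l (ltW K0) h.
by rewrite mulrA mulfV ?gt_eqF // mul1r mulr1.
Qed.

Lemma final f : A f -> (L f)%:E = lip_const (fun x y => rhoL A L (delta x) (delta y)) f.
Proof.
move=> Af; rewrite /lip_const.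
set S := ([set 0%E] `|` _).
have ub : forall z, S z -> (z <= ereal_sup S)%E := @ereal_sup_ubound R S.
apply/eqP; rewrite eq_le; apply/andP; split; last first.
  apply: ge_ereal_sup => r [-> | [x [y [_ ->]]]]; first by rewrite lee_fin Lge0.
  rewrite lee_fin -/(rho x y).
  case: (eqVneq (rho x y) 0) => [->|nz]; first by rewrite invr0 mulr0 Lge0.
  have rp : 0 < rho x y by rewrite lt0r nz rho_ge0.
  by rewrite ler_pdivrMr //; exact: key1.
case eq: (ereal_sup S) => [M| |]; last 2 first.
- by rewrite leey.
- by have := ub 0%E (or_introl erefl); rewrite eq.
have M0 : 0 <= M by have := ub 0%E (or_introl erefl); rewrite eq lee_fin.
rewrite lee_fin; apply/ler_addgt0Pr => d d0.
have Md : 0 < M + d by rewrite ltr_wpDl.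
apply: main_le => // x y.
case: (eqVneq x y) => [->|nxy].
  by rewrite subrr normr0 mulr_ge0 ?rho_ge0 ?ltW.
case: (eqVneq (rho x y) 0) => [r0|nz].
  by have := key1 _ x y Af; rewrite r0 !mulr0.
have rp : 0 < rho x y by rewrite lt0r nz rho_ge0.
have : S (`|f x - f y| / rho x y)%:E by rewrite /S; right; exists x, y; split => //; apply/eqP.
move=> /ub; rewrite eq lee_fin ler_pdivrMr // => h.
by apply: le_trans h _; rewrite ler_wpM2r ?rho_ge0 // lerDl ltW.
Qed.

End Main.

Theorem corollary8p3 (R : realType) (X : topologicalType)
  (A : set (X -> R)) (L : (X -> R) -> R) :
  compact [set: X] -> hausdorff_space X ->
  dense_lattice_subspace A ->
  lip_norm A L ->
  (forall f g, A f -> A g ->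
     L (fun x => Num.max (f x) (g x)) <= Num.max (L f) (L g)) ->
  forall f, A f ->
    (L f)%:E = lip_const (fun x y => rhoL A L (delta x) (delta y)) f.
Proof.
by move=> hc _ hA hL hmax f Af; apply: final.
Qed.
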